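(* Fix $\gamma\in[0,1]$. Let $\widetilde X=(\widetilde x_{a,o})$ be the uncapped guiding fractional process obtained by running EFTT with threshold $\gamma$ (described in the context), and let $X$ be the integral matching produced by the following rounding scheme: when item $o$ arrives, feed the vector $(\widetilde x_{a,o})_{a\in N}$ to an online correlated selection (OCS) algorithm (described in the context), match $o$ to the selected agent if that agent is unmatched, and otherwise match $o$ to an arbitrary unmatched agent who likes it (if one exists). Then for every class $i\in[k]$, \[\mathbb{E}[V_i(X)]\ge\rho(\gamma)\cdot\mathrm{prop}_i,\qquad \rho(\gamma)=\int_0^\gamma e^{-\theta}p'(\theta)\,d\theta,\qquad p(t)=1-\exp\!\left(-t-\tfrac12t^2-\tfrac{4-2\sqrt3}{3}t^3\right).\] Hence the algorithm is $\rho(\gamma)$-CPROP in expectation.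
   Context: Online class matching: an instance is a bipartite graph $G=(N,M,E)$ with known agents $N$, items $M$, $E\subseteq M\times N$ ($a$ likes $o$ iff $(o,a)\in E$); agents are partitioned into $k$ known classes $N_1,\dots,N_k$. Items arrive one at a time in adversarial order; upon arrival of $o$ its set of liking agents is revealed and $o$ must be irrevocably matched to at most one currently unmatched agent liking it. For a (fractional or integral) matching $X=(x_{o,a})$, $V_i(X)=\sum_{a\in N_i}\sum_o x_{o,a}$ and $y_j(X)\in[0,1]^M$ has $y_j(X)_o=\sum_{a\in N_j}x_{o,a}$. For $y\in[0,1]^M$, $V_i^*(y)$ is the maximum size of a fractional matching using edges of $E$ between $N_i$ and $M$ with degree at most $y_o$ at each item $o$ and at most $1$ at each agent. The proportional share of class $i$ is $\mathrm{prop}_i=\max_X\min_{j\in[k]}V_i^*(y_j(X))$, the maximum over all fractional matchings $X$ of $G$. An algorithm is $\alpha$-CPROP in expectation if $\mathbb{E}[V_i(X)]\ge\alpha\,\mathrm{prop}_i$ for every class $i$. Uncapped EFTT with threshold $\gamma$: a continuous water-filling process producing loads $\widetilde x_{a,o}\ge0$ in which agents have no capacity bound (the load $\sum_o\widetilde x_{a,o}$ may exceed $1$). Upon arrival of $o$: Phase I: let $Z_\gamma$ be the set of classes with at least one agent liking $o$ of current load less than $\gamma$; while $Z_\gamma\neq\emptyset$ and $o$ is not fully assigned, continuously assign mass of $o$ split equally among the classes in $Z_\gamma$, within each class to the agent(s) liking $o$ of minimum current load, removing a class from $Z_\gamma$ once it has no agent liking $o$ with load below $\gamma$. Phase II: once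 $Z_\gamma=\emptyset$, continuously assign the remaining mass of $o$ to the agent(s) liking $o$ with smallest current load until $o$ is fully assigned. OCS: an online algorithm which at each step receives a nonnegative vector $(\widetilde x_{a,o})_{a\in N}$ for some item $o$ with $\sum_a\widetilde x_{a,o}\le1$ and selects an agent $a$ with $\widetilde x_{a,o}>0$, such that by the end each agent $a$ has been selected at least once with probability at least $p(\widetilde x_a)$, where $\widetilde x_a=\sum_o\widetilde x_{a,o}$ and $p$ is as in the claim. *)

(* Defs.v *)
From HB Require Import structures.
From mathcomp Require Import all_boot all_order all_algebra.
From mathcomp Require Import all_classical all_reals all_analysis.
Set Implicit Arguments. Unset Strict Implicit. Unset Printing Implicit Defensive.
Import Order.TTheory GRing.Theory Num.Theory.
Import numFieldNormedType.Exports.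
Local Open Scope classical_set_scope.
Local Open Scope ring_scope.

(* Conventions.
   - Agents form a finite type [A]; classes are ['I_k], [cls a] is the class of a.
   - Items are ['I_m]; WLOG items are labelled by arrival time: item [o]
     arrives at step [o] (the adversarial order is absorbed by quantifying
     over all graphs).
   - [likes a o] : agent a likes item o, i.e. (o,a) \in E. *)

Section Defs.
Variables (R : realType) (k m : nat) (A : finType).
Variables (cls : A -> 'I_k) (likes : A -> 'I_m -> bool).

Definition frac_matching (x : 'I_m -> A -> R) : Prop :=
  [/\ (forall o a, 0 <= x o a),
      (forall o a, ~~ likes a o -> x o a = 0),
      (forall o, \sum_(a : A) x o a <= 1) &
      (forall a, \sum_(o : 'I_m) x o a <= 1)].

Definition yvec (j : 'I_k) (x : 'I_m -> A -> R) : 'I_m -> R :=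
  fun o => \sum_(a : A | cls a == j) x o a.

Definition Vstar (i : 'I_k) (y : 'I_m -> R) : R :=
  sup [set v : R | exists z : 'I_m -> A -> R,
    [/\ (forall o a, 0 <= z o a),
        (forall o a, ~~ (likes a o && (cls a == i)) -> z o a = 0),
        (forall o, \sum_(a : A) z o a <= y o),
        (forall a, \sum_(o : 'I_m) z o a <= 1) &
        v = \sum_(o : 'I_m) \sum_(a : A) z o a]].

(* min_{j in [k]} f j, computed as a fold of Num.min seeded with f i
   (i : 'I_k is a class, so the seed is one of the values and the result is
   exactly the minimum over all j). *)
Definition min_classes (i : 'I_k) (f : 'I_k -> R) : R :=
  \big[Num.min/f i]_(j < k) f j.

Definition prop_share (i : 'I_k) : R :=
  sup [set v : R | exists x : 'I_m -> A -> R,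
    frac_matching x /\ v = min_classes i (fun j => Vstar i (yvec j x))].

(* Phase-I capacity of class c for the current item: the mass class c can
   absorb before all its agents liking the item reach load gamma. *)
Definition capI (gamma : R) (L : A -> R) (lik : A -> bool) (c : 'I_k) : R :=
  \sum_(a : A | lik a && (cls a == c)) Num.max 0 (gamma - L a).

(* One arrival of uncapped EFTT: [L] = current loads, [lik] = agents liking the
   item, [x a] = mass of the item assigned to a.  The continuous water-filling
   is described by its outcome:
   Phase I: every class in Z_gamma receives mass at the same rate until it
   leaves Z_gamma, so class c receives min(tau, capI c) for a common tau,
   until the item is fully assigned or all classes have left; inside a class
   the mass is water-filled to the min-load agents (common level lam c).
   Phase II: the remaining mass is water-filled (level mu) over all agents
   liking the item. *)
Definition EFTT_step (gamma : R) (L : A -> R) (lik : A -> bool)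
    (x : A -> R) : Prop :=
  exists (tau : R) (lam : 'I_k -> R) (mu : R) (x1 x2 : A -> R),
  [/\ 0 <= tau,
      \sum_(c < k) Num.min tau (capI gamma L lik c)
        = Num.min 1 (\sum_(c < k) capI gamma L lik c),
      (forall c, \sum_(a : A | lik a && (cls a == c)) x1 a
                   = Num.min tau (capI gamma L lik c)),
      (forall a, lik a -> x1 a = Num.max 0 (lam (cls a) - L a)) &
      (forall a, lik a -> x2 a = Num.max 0 (mu - (L a + x1 a)))] /\
  [/\
      ((exists a, lik a) -> \sum_(a : A | lik a) x2 a
                   = 1 - Num.min 1 (\sum_(c < k) capI gamma L lik c)) &
      (forall a, x a = if lik a then x1 a + x2 a else 0)].

Definition is_EFTT (gamma : R) (xt : A -> 'I_m -> R) : Prop :=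
  forall o : 'I_m,
    EFTT_step gamma (fun a => \sum_(o' < m | (o' < o)%N) xt a o')
              (fun a => likes a o) (fun a => xt a o).

Definition p_ocs (t : R) : R :=
  1 - expR (- (t + t ^+ 2 / 2 + (4 - 2 * Num.sqrt 3) / 3 * t ^+ 3)).

Definition rho (gamma : R) : \bar R :=
  let I01 : set R := `[0, gamma]%classic in
  (\int[@lebesgue_measure R]_(t in I01)
      (expR (- t) * (derive1 p_ocs t))%:E)%E.

Variables (d : measure_display) (Omega : measurableType d)
          (P : probability Omega R).

(* sel o w : the agent selected by the OCS when item o (with vector
   (xt a o)_a) is fed to it, under randomness w (None only if the vector is
   zero). *)
Definition is_OCS_run (xt : A -> 'I_m -> R) (sel : 'I_m -> Omega -> option A)
  : Prop :=
  [/\ (forall o a, measurable [set w | sel o w = Some a]),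
      (forall o w a, sel o w = Some a -> 0 < xt a o),
      (forall o w, (exists a, 0 < xt a o) -> sel o w != None) &
      (forall a, ((p_ocs (\sum_(o < m) xt a o))%:E
                   <= P [set w | exists o, sel o w = Some a])%E)].

Definition matched_before (mt : 'I_m -> Omega -> option A) (w : Omega)
    (a : A) (o : 'I_m) : bool :=
  [exists o' : 'I_m, (o' < o)%N && (mt o' w == Some a)].

Definition is_rounding (sel mt : 'I_m -> Omega -> option A) : Prop :=
  forall o w,
    match sel o w with
    | Some a => ~~ matched_before mt w a o -> mt o w = Some a
    | None => True
    end /\
    ((forall a, sel o w = Some a -> matched_before mt w a o) ->
     if [exists b, likes b o && ~~ matched_before mt w b o]
     then exists b, [/\ likes b o, ~~ matched_before mt w b o & mt o w = Some b]
     else mt o w = None).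

Definition Vclass (mt : 'I_m -> Omega -> option A) (i : 'I_k) (w : Omega) : R :=
  \sum_(o < m) \sum_(a : A | cls a == i) (mt o w == Some a)%:R.

End Defs.

(* Main.v *)
Require Import Defs.
From HB Require Import structures.
From mathcomp Require Import all_boot all_order all_algebra.
From mathcomp Require Import all_classical all_reals all_analysis.
From mathcomp Require Import measurable_realfun.
From mathcomp Require Import ring lra.
Import Order.TTheory GRing.Theory Num.Theory.
Import numFieldNormedType.Exports.
Local Open Scope classical_set_scope.
Local Open Scope ring_scope.

Section Ana.
Variable R : realType.
Definition cc : R := (4 - 2 * Num.sqrt 3) / 3.
Definition qf (t : R) : R := t + t ^+ 2 / 2 + cc * t ^+ 3.
Definition dq (t : R) : R := 1 + t + 3 * cc * t ^+ 2.
Definition P1 (t : R) : R := expR (- qf t) * dq t.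

Lemma is_derive_qf (t : R) : is_derive t (1:R) qf (dq t).
Proof.
have := is_deriveD (is_deriveD (is_derive_id t (1:R)) (is_deriveM (is_deriveX 2 (is_derive_id t (1:R))) (is_derive_cst (2^-1 : R) t 1)))
   (is_deriveM (is_derive_cst cc t 1) (is_deriveX 3 (is_derive_id t (1:R)))).
move=> H; apply: (is_derive_eq H).
rewrite /dq /= /GRing.scale /= !mulr0 !addr0 !mulr1 expr1 mulrA mulVf ?pnatr_eq0 // mul1r; ring.
Qed.

Lemma is_derive_p (t : R) : is_derive t (1:R) (@p_ocs R) (P1 t).
Proof.
have H1 := @is_derive1_comp R expR (- qf) t _ _ (is_derive_expR (- qf t)) (is_deriveN (is_derive_qf t)).
have H2 := is_deriveB (is_derive_cst (1:R) t 1) H1.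
apply: (is_derive_eq H2).
rewrite /P1 /=. ring.
Qed.

Lemma derive1_p (t : R) : derive1 (@p_ocs R) t = P1 t.
Proof. have H := is_derive_p t. by rewrite derive1E derive_val. Qed.
Definition gfun (t : R) : R := expR (- t) * P1 t.

Lemma gfun_cont : continuous gfun.
Proof.
move=> x; apply: differentiable_continuous; apply/derivable1_diffP.
have E : gfun = (expR \o -%R) * ((expR \o (- qf)) * (cst 1 + id + cst (3*cc) * id^+2)).
  by apply/funext => t; rewrite /gfun /P1 /dq.
rewrite E.
have H1 := @is_derive1_comp R expR (-%R) x _ _ (is_derive_expR (- x)) (is_deriveNid x 1).
have H2 := @is_derive1_comp R expR (- qf) x _ _ (is_derive_expR (- qf x)) (is_deriveN (is_derive_qf x)).
apply: ex_derive.
Qed.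

Notation mu := (@lebesgue_measure R).

Definition Phi (t : R) : R := Rintegral mu `[0, t] gfun.

Lemma gint (a b : R) : mu.-integrable `[a, b] (EFin \o gfun).
Proof.
apply: continuous_compact_integrable; first exact: segment_compact.
by apply: continuous_subspaceT => x; exact: gfun_cont.
Qed.

Lemma Phi0 : Phi 0 = 0.
Proof. by rewrite /Phi set_itv1 Rintegral_set1. Qed.

Lemma Phi_cont (b : R) : 0 <= b -> {within `[0, b], continuous Phi}.
Proof. move=> b0; exact: (@parameterized_integral_continuous R 0 b gfun b0 (gint 0 b)). Qed.

Lemma Phi_der (x b : R) : 0 < x -> x < b -> is_derive x (1:R) Phi (gfun x).
Proof.
move=> x0 xb.
have [H1 H2] := @continuous_FTC1_closed R gfun 0 x b xb (gint 0 b) x0 (gfun_cont x).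
have := derivableP H1. by rewrite -derive1E H2.
Qed.

Lemma rhoE (gamma : R) : 0 <= gamma -> rho gamma = (Phi gamma)%:E.
Proof.
move=> g0; rewrite /rho /Phi.
have -> : (fun t => (expR (- t) * derive1 (@p_ocs R) t)%:E) = (EFin \o gfun).
  by apply/funext => t; rewrite derive1_p.
rewrite /Rintegral fineK //.
exact: integrable_fin_num (gint 0 gamma).
Qed.

Lemma cc_bounds : 0 <= cc /\ 3 * cc <= 1.
Proof.
have s0 : 0 <= Num.sqrt (3:R) := sqrtr_ge0 _.
have s2 : Num.sqrt (3:R) ^+ 2 = 3 by rewrite sqr_sqrtr.
rewrite /cc; split.
  apply: divr_ge0 => //; nra.
rewrite mulrC -mulrA mulVf ?pnatr_eq0 // mulr1; nra.
Qed.

Lemma dq_ge1 t : 0 <= t -> 1 <= dq t.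
Proof. have [c0 c1] := cc_bounds; rewrite /dq => t0; nra. Qed.

Lemma gfun_ge0 t : 0 <= t -> 0 <= gfun t.
Proof.
move=> t0; rewrite /gfun /P1; apply: mulr_ge0; first exact: expR_ge0.
apply: mulr_ge0; first exact: expR_ge0.
exact: le_trans ler01 (dq_ge1 t t0).
Qed.

Lemma qf_poly_ineq s t : 0 <= s -> s <= t -> t <= 1 ->
  dq t <= (1 + ((t + qf t) - (s + qf s))) * dq s.
Proof.
have [c0 c1] := cc_bounds => s0 st t1.
have t0 : 0 <= t by exact: le_trans st.
have s2 : s ^+ 2 <= t ^+ 2 by rewrite lerXn2r // nnegrE.
have s3 : s ^+ 3 <= t ^+ 3 by rewrite lerXn2r // nnegrE.
have h1 : t - s <= qf t - qf s.
  rewrite /qf; have : 0 <= cc * (t ^+ 3 - s ^+ 3) by apply: mulr_ge0; lra.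
  lra.
have h2 : 1 + s <= dq s by rewrite /dq; nra.
have h3 : dq t - dq s = (t - s) * (1 + 3 * cc * (t + s)) by rewrite /dq; ring.
have h4 : (t - s) * (1 + 3 * cc * (t + s)) <= (t - s) * (2 * (1 + s)).
  apply: ler_wpM2l; first lra. nra.
have h5 : (t - s) * (2 * (1 + s)) <= ((t + qf t) - (s + qf s)) * dq s.
  have -> : (t - s) * (2 * (1 + s)) = (2 * (t - s)) * (1 + s) by ring.
  apply: ler_pM; lra.
lra.
Qed.


End Ana.

Section Ana2.
Variable R : realType.
Local Notation gfun := (@gfun R).
Local Notation qf := (@qf R).
Local Notation dq := (@dq R).
Lemma gfun_decr s t : 0 <= s -> s <= t -> t <= 1 -> gfun t <= gfun s.
Proof.
move=> s0 st t1.
have E (x : R) : gfun x = expR (- (x + qf x)) * dq x by rewrite /gfun /P1 mulrA -expRD (opprD x).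
rewrite !E.
set D := (t + qf t) - (s + qf s).
have key : dq t <= expR D * dq s.
  apply: le_trans (@qf_poly_ineq R s t s0 st t1) _.
  apply: ler_wpM2r; first exact: le_trans ler01 (@dq_ge1 R s s0).
  exact: expR_ge1Dx.
have -> : - (t + qf t) = - (s + qf s) + - D by rewrite /D; ring.
rewrite expRD -mulrA ler_pM2l ?expR_gt0 // expRN.
have eD : 0 < expR D := expR_gt0 D.
apply: le_trans (ler_wpM2l _ key) _; first by rewrite invr_ge0 ltW.
by rewrite mulrA mulVf ?mul1r // gt_eqF.
Qed.

Lemma p0 : p_ocs (0:R) = 0.
Proof. rewrite /p_ocs !expr0n /= !mulr0 !addr0 mul0r addr0 oppr0 expR0 subrr //. Qed.

Lemma p_mono (a b : R) : 0 <= a -> a <= b -> p_ocs a <= p_ocs b.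
Proof.
move=> a0 ab; rewrite /p_ocs lerD2l lerN2 ler_expR lerN2.
have [c0 c1] := cc_bounds R.
have b0 : 0 <= b by exact: le_trans ab.
have s2 : a ^+ 2 <= b ^+ 2 by rewrite lerXn2r // nnegrE.
have s3 : a ^+ 3 <= b ^+ 3 by rewrite lerXn2r // nnegrE.
have : cc R * a ^+ 3 <= cc R * b ^+ 3 by apply: ler_wpM2l.
rewrite -/(cc R); lra.
Qed.

End Ana2.

Lemma ioo_l {R : realType} {a b x : R} : x \in `]a, b[ -> a < x.
Proof. by rewrite in_itv /= => /andP[]. Qed.
Lemma ioo_r {R : realType} {a b x : R} : x \in `]a, b[ -> x < b.
Proof. by rewrite in_itv /= => /andP[]. Qed.
Lemma icc_l {R : realType} {a b x : R} : x \in `[a, b] -> a <= x.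
Proof. by rewrite in_itv /= => /andP[]. Qed.
Lemma icc_r {R : realType} {a b x : R} : x \in `[a, b] -> x <= b.
Proof. by rewrite in_itv /= => /andP[]. Qed.

Lemma sub_cc {R : realType} {a b c d : R} : c <= a -> b <= d -> `[a, b] `<=` `[c, d].
Proof. by move=> ca bd; apply: subset_itvScc; rewrite bnd_simp. Qed.

Section Cert.
Variables (R : realType) (gamma : R).
Hypotheses (g0 : 0 <= gamma) (g1 : gamma <= 1).
Local Notation Phi := (@Phi R).
Local Notation gfun := (@gfun R).
Local Notation Phi_der := (@Phi_der R).
Local Notation Phi_cont := (@Phi_cont R).
Local Notation Phi0 := (@Phi0 R).
Local Notation is_derive_p := (@is_derive_p R).
Local Notation P1 := (@P1 R).
Local Notation p0 := (@p0 R).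
Definition rr : R := Phi gamma.
Definition fF : R -> R := (expR * (Phi - cst rr)) + cst rr.
Definition GG : R -> R := (@p_ocs R) - fF.

Lemma fF_der (x : R) : 0 < x -> x < gamma ->
  is_derive x (1:R) fF (expR x * (Phi x - rr) + expR x * gfun x).
Proof.
move=> x0 xg.
have H := is_deriveD (is_deriveM (is_derive_expR x) (is_deriveB (Phi_der x gamma x0 xg) (is_derive_cst rr x 1))) (is_derive_cst rr x 1).
apply: (is_derive_eq H); rewrite /= /GRing.scale /= (_ : (Phi - cst rr) x = Phi x - rr) //; ring.
Qed.

Lemma fF_cont : {within `[0, gamma], continuous fF}.
Proof.
move=> x; apply: continuousD; last exact: cst_continuous.
apply: continuousM.
  by apply: (continuous_subspaceT (fun y => @continuous_expR R y)).
apply: continuousB; last exact: cst_continuous.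
exact: (Phi_cont gamma g0).
Qed.

Lemma expR_gfun (x : R) : expR x * gfun x = P1 x.
Proof. by rewrite /gfun mulrA -expRD subrr expR0 mul1r. Qed.

Lemma GG_der (x : R) : 0 < x -> x < gamma -> is_derive x (1:R) GG (rr - fF x).
Proof.
move=> x0 xg.
have H := is_deriveB (is_derive_p x) (fF_der x x0 xg).
have fFx : fF x = expR x * (Phi x - rr) + rr by []. apply: (is_derive_eq H); rewrite fFx -expR_gfun; ring.
Qed.

Lemma p_cont : continuous (@p_ocs R).
Proof.
move=> x; apply: differentiable_continuous; apply/derivable1_diffP.
have H := is_derive_p x; exact: ex_derive.
Qed.

Lemma GG_cont : {within `[0, gamma], continuous GG}.
Proof.
move=> x; apply: continuousB; last exact: fF_cont.
by apply: (continuous_subspaceT p_cont).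
Qed.

Lemma fF_der_ge0 (t : R) : 0 < t -> t < gamma ->
  0 <= expR t * (Phi t - rr) + expR t * gfun t.
Proof.
move=> t0 tg.
have [c /andP[tc cg] E] : exists2 c, t < c < gamma & Phi gamma - Phi t = gfun c * (gamma - t).
  have [c cI E] := @MVT R Phi gfun t gamma tg
     (fun x xI => Phi_der x gamma (lt_trans t0 (ioo_l xI)) (ioo_r xI))
     (continuous_subspaceW (sub_cc (ltW t0) (lexx _)) (Phi_cont gamma g0)).
  by exists c => //; rewrite !(itvP cI).
have G1 := g1; have G0 := g0. have t1 : t <= 1 by lra.
have gd := @gfun_decr R t c (ltW t0) (ltW tc) (le_trans (ltW cg) g1).
have gc0 := @gfun_ge0 R c (ltW (lt_trans t0 tc)).
have : gfun c * (gamma - t) <= gfun c by rewrite ler_piMr //; lra.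
rewrite -E /rr -mulrDr => h; apply: mulr_ge0; first exact: expR_ge0.
lra.
Qed.

Lemma fF_mono (x y : R) : 0 <= x -> x <= y -> y <= gamma -> fF x <= fF y.
Proof.
apply: ger0_derive1_ndecr; last exact: fF_cont.
  move=> z zI; have H := fF_der z (ioo_l zI) (ioo_r zI); exact: ex_derive.
move=> z zI; have H := fF_der z (ioo_l zI) (ioo_r zI).
rewrite derive1E derive_val; exact: fF_der_ge0 z (ioo_l zI) (ioo_r zI).
Qed.

Lemma fF0 : fF 0 = 0.
Proof. have -> : fF 0 = expR 0 * (Phi 0 - rr) + rr by []. rewrite Phi0 expR0; ring. Qed.

Lemma fFg : fF gamma = rr.
Proof. have -> : fF gamma = expR gamma * (Phi gamma - rr) + rr by []. by rewrite /rr subrr mulr0 add0r. Qed.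

Lemma GG0 : GG 0 = 0.
Proof. have -> : GG 0 = p_ocs 0 - fF 0 by []. by rewrite fF0 p0 subr0. Qed.

Lemma GG_ineq (s e t : R) : 0 <= s -> s <= e -> e <= t -> t <= gamma ->
  (e - s) * (rr - fF t) <= GG e - GG s.
Proof.
move=> s0 se et tg.
have [c cI E] := @MVT_segment R GG (fun x => rr - fF x) s e se
   (fun x xI => GG_der x (le_lt_trans s0 (ioo_l xI)) (lt_le_trans (ioo_r xI) (le_trans et tg)))
   (continuous_subspaceW (sub_cc s0 (le_trans et tg)) GG_cont).
rewrite E mulrC; apply: ler_wpM2r; first lra.
rewrite lerD2l lerN2; apply: fF_mono.
- exact: le_trans s0 (icc_l cI).
- exact: le_trans (icc_r cI) et.
- exact: tg.
Qed.

End Cert.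

Lemma helper1 {R : realType} {g La xa x1 lam T LaS : R} : T < g -> LaS = La + xa -> LaS <= T ->
  lam - La <= x1 -> x1 <= xa -> g <= lam -> False.
Proof. move=> *; lra. Qed.

Lemma bigmin_le_seq {R : realType} {I : eqType} (s : seq I) (P : pred I) (F : I -> R) x0 j :
  j \in s -> P j -> \big[Num.min/x0]_(l <- s | P l) F l <= F j.
Proof.
elim: s => // h t IH; rewrite inE big_cons => /orP[/eqP-> Pj|jt Pj].
  by rewrite Pj ge_min lexx.
case: (P h); last exact: IH.
by rewrite ge_min (IH jt Pj) orbT.
Qed.

Lemma min_classes_le {R : realType} {k : nat} (i j : 'I_k) (F : 'I_k -> R) :
  min_classes i F <= F j.
Proof. by rewrite /min_classes; apply: bigmin_le_seq => //; exact: mem_index_enum. Qed.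

Section Comb.
Variables (R : realType) (gamma : R) (k m : nat) (A : finType).
Variables (cls : A -> 'I_k) (likes : A -> 'I_m -> bool) (xt : A -> 'I_m -> R).
Hypotheses (g0 : 0 <= gamma) (g1 : gamma <= 1) (hE : is_EFTT cls likes gamma xt).
Variable i : 'I_k.

Local Notation f := (fF R gamma).
Local Notation G := (GG R gamma).
Local Notation r := (rr R gamma).

Definition Lf (a : A) (n : nat) : R := \sum_(o' < m | (o' < n)%N) xt a o'.
Definition Tl (a : A) : R := \sum_(o < m) xt a o.
Definition cl (x : R) : R := Num.min x gamma.

Lemma xt_ge0 a o : 0 <= xt a o.
Proof.
have [tau [lam [mu [x1 [x2 [[_ _ _ hx1 hx2] [_ hx]]]]]]] := hE o.
rewrite hx; case: ifP => // la; rewrite (hx1 a la) (hx2 a la).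
by apply: addr_ge0; rewrite le_max lexx.
Qed.

Lemma Lf0 a : Lf a 0 = 0.
Proof. by rewrite /Lf big_pred0. Qed.

Lemma LfS a (o : 'I_m) : Lf a o.+1 = Lf a o + xt a o.
Proof.
rewrite /Lf (bigD1 o) //= addrC; congr (_ + _).
apply: eq_bigl => o'; rewrite ltnS andbC.
by rewrite -val_eqE /= -ltn_neqAle.
Qed.

Lemma Lfm a : Lf a m = Tl a.
Proof. by rewrite /Lf /Tl; apply: eq_bigl => o'; rewrite ltn_ord. Qed.

Lemma Lf_ge0 a n : 0 <= Lf a n.
Proof. by apply: sumr_ge0 => o _; exact: xt_ge0. Qed.

Lemma Lf_mono a n1 n2 : (n1 <= n2)%N -> Lf a n1 <= Lf a n2.
Proof.
move=> n12; rewrite /Lf [X in X <= _]big_mkcond [X in _ <= X]big_mkcond /=.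
apply: ler_sum => o _; case: ifP => h1.
  by rewrite (leq_trans h1 n12).
by case: ifP => _ //; exact: xt_ge0.
Qed.

Lemma Lf_leT a n : Lf a n <= Tl a.
Proof.
rewrite /Lf /Tl big_mkcond /=; apply: ler_sum => o _.
by case: ifP => _ //; exact: xt_ge0.
Qed.

Lemma Tl_ge0 a : 0 <= Tl a.
Proof. by apply: sumr_ge0 => o _; exact: xt_ge0. Qed.

Lemma cl_le x : cl x <= gamma.
Proof. by rewrite /cl ge_min lexx orbT. Qed.

Lemma cl_ge0 x : 0 <= x -> 0 <= cl x.
Proof. by move=> x0; rewrite /cl le_min x0 g0. Qed.

Lemma cl_mono x y : x <= y -> cl x <= cl y.
Proof. by move=> xy; rewrite /cl le_min !ge_min xy lexx !orbT. Qed.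

Lemma cl_id x : x <= gamma -> cl x = x.
Proof. by move=> h; rewrite /cl min_l. Qed.

Lemma cl_g x : gamma <= x -> cl x = gamma.
Proof. by move=> h; rewrite /cl min_r. Qed.

Lemma cl_lex x : cl x <= x.
Proof. by rewrite /cl ge_min lexx. Qed.

Lemma f_le_r x : 0 <= x -> x <= gamma -> f x <= r.
Proof. by move=> x0 xg; rewrite -fFg; apply: fF_mono. Qed.

Lemma f_ge0 x : 0 <= x -> x <= gamma -> 0 <= f x.
Proof. by move=> x0 xg; rewrite -(fF0 R gamma); apply: fF_mono. Qed.

Lemma r_ge0 : 0 <= r.
Proof. by rewrite -fFg; apply: f_ge0. Qed.

Lemma G_mono s e : 0 <= s -> s <= e -> e <= gamma -> G s <= G e.
Proof.
move=> s0 se eg.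
have h := @GG_ineq R gamma g0 g1 s e e s0 se (lexx e) eg.
have h2 := f_le_r e (le_trans s0 se) eg.
rewrite -subr_ge0; apply: le_trans h; apply: mulr_ge0; rewrite subr_ge0 //.
Qed.

Definition beta (a : A) : R := f (cl (Tl a)).
Definition term (b : A) (o : 'I_m) : R := G (cl (Lf b o.+1)) - G (cl (Lf b o)).
Definition alpha (o : 'I_m) : R := k%:R * \sum_(b | cls b == i) term b o.

Lemma beta_ge0 a : 0 <= beta a.
Proof. by apply: f_ge0; [apply: cl_ge0; exact: Tl_ge0 | exact: cl_le]. Qed.

Lemma term_ge0 b o : 0 <= term b o.
Proof.
rewrite /term subr_ge0; apply: G_mono.
- by apply: cl_ge0; exact: Lf_ge0.
- by apply: cl_mono; apply: Lf_mono.
- exact: cl_le.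
Qed.

Lemma alpha_ge0 o : 0 <= alpha o.
Proof. by apply: mulr_ge0 => //; apply: sumr_ge0 => b _; exact: term_ge0. Qed.


Lemma edge a o : cls a = i -> likes a o -> r <= beta a + alpha o.
Proof.
move=> ca la.
have [hT|hT] := leP gamma (Tl a).
  rewrite /beta (cl_g _ hT) fFg -[X in X <= _]addr0 lerD2l; exact: alpha_ge0.
have hEo : EFTT_step cls gamma (fun b => Lf b o) (fun b => likes b o) (fun b => xt b o) := hE o.
have [tau [lam [mu [x1 [x2 [[tau0 hsum hcls hx1' hx2'] [_ hx']]]]]]] := hEo.
have hx1 b : likes b o -> x1 b = Num.max 0 (lam (cls b) - Lf b o) := hx1' b.
have hx2 b : likes b o -> x2 b = Num.max 0 (mu - (Lf b o + x1 b)) := hx2' b.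
have hx b : xt b o = if likes b o then x1 b + x2 b else 0 := hx' b.
pose C := capI cls gamma (fun b => Lf b o) (fun b => likes b o).
have hsum' : \sum_(c < k) Num.min tau (C c) = Num.min 1 (\sum_(c < k) C c) := hsum.
have hcls' c : \sum_(b | likes b o && (cls b == c)) x1 b = Num.min tau (C c) := hcls c.
have hxb b : likes b o -> xt b o = x1 b + x2 b by move=> lb; rewrite hx lb.
have x2ge b : likes b o -> 0 <= x2 b by move=> lb; rewrite (hx2 b lb) le_max lexx.
have x1ge b : likes b o -> x1 b <= xt b o by move=> lb; rewrite hxb // lerDl x2ge.
have La0 := Lf_ge0 a o.
have LaS : Lf a o.+1 = Lf a o + xt a o := LfS a o.
have LaT : Lf a o.+1 <= Tl a := Lf_leT a o.+1.
have xa0 := xt_ge0 a o.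
have x1a : lam i - Lf a o <= x1 a by rewrite (hx1 a la) ca le_max lexx orbT.
have x1xa := x1ge a la.
have tauC : tau < C i.
  rewrite ltNge; apply/negP => Ctau.
  have e1 := hcls' i; rewrite (min_r Ctau) in e1.
  have [lg|gl] := ltP (lam i) gamma.
    have : \sum_(b | likes b o && (cls b == i)) x1 b < C i.
      rewrite /C /capI (bigD1 a) /=; last by rewrite la ca eqxx.
      rewrite [X in _ < X](bigD1 a) /=; last by rewrite la ca eqxx.
      apply: ltr_leD.
        rewrite (hx1 a la) ca.
        have Lag : Lf a o < gamma by lra.
        rewrite [X in _ < X]max_r ?subr_ge0 ?ltW // gt_max; apply/andP; split; lra.
      apply: ler_sum => b /andP[/andP[lb cb] _]; rewrite (hx1 b lb) (eqP cb).
      rewrite ge_max !le_max lexx /=; apply/orP; right; lra.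
    by rewrite e1 ltxx.
  exact: (helper1 hT LaS LaT x1a x1xa gl).
have ktau : 1 <= k%:R * tau.
  have hlt : \sum_(c < k) Num.min tau (C c) < \sum_(c < k) C c.
    rewrite (bigD1 i) //= [X in _ < X](bigD1 i) //=.
    apply: ltr_leD; first by rewrite (min_l (ltW tauC)).
    by apply: ler_sum => c _; rewrite ge_min lexx orbT.
  have h1 : 1 < \sum_(c < k) C c.
    rewrite ltNge; apply/negP => hle.
    by move: hlt; rewrite hsum' (min_r hle) ltxx.
  have e : \sum_(c < k) Num.min tau (C c) = 1 by rewrite hsum' min_l // ltW.
  have -> : k%:R * tau = \sum_(c < k) tau by rewrite sumr_const card_ord mulr_natl.
  by rewrite -e; apply: ler_sum => c _; rewrite ge_min lexx.
pose D := r - f (Tl a).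
have D0 : 0 <= D by rewrite /D subr_ge0; apply: f_le_r; [exact: Tl_ge0 | exact: ltW].
have hterm b : cls b == i -> (if likes b o then x1 b else 0) * D <= term b o.
  move=> cb; case: ifP => lb; last by rewrite mul0r term_ge0.
  have := hx1 b lb; rewrite (eqP cb) => e1.
  have [hle|hlt] := leP (lam i) (Lf b o).
    by rewrite e1 max_l ?subr_le0 // mul0r term_ge0.
  have e1' : x1 b = lam i - Lf b o by rewrite e1 max_r // subr_ge0 ltW.
  rewrite e1'.
  have lamT : lam i <= Tl a by lra.
  have Lb0 := Lf_ge0 b o.
  have LbS := LfS b o.
  have x1b := x1ge b lb.
  have hG := @GG_ineq R gamma g0 g1 (Lf b o) (lam i) (Tl a) Lb0 (ltW hlt) lamT (ltW hT).
  rewrite /term (cl_id (Lf b o)); last lra.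
  apply: le_trans hG _; rewrite lerD2r.
  apply: G_mono; first lra.
    rewrite -(cl_id (lam i)); last lra.
    apply: cl_mono; rewrite LbS; lra.
  exact: cl_le.
have hsumD : tau * D <= \sum_(b | cls b == i) term b o.
  have e2 : \sum_(b | likes b o && (cls b == i)) x1 b = tau by rewrite hcls' min_l // ltW.
  rewrite -e2 big_mkcondl /= mulr_suml; apply: ler_sum => b cb; exact: hterm.
have Dal : D <= alpha o.
  rewrite /alpha; apply: le_trans (ler_wpM2l (ler0n _ k) hsumD).
  rewrite mulrA -{1}[D]mul1r; exact: ler_wpM2r.
move: Dal; rewrite /beta (cl_id _ (ltW hT)) /D; lra.
Qed.


Lemma total : k%:R * \sum_(a | cls a == i) beta a + \sum_(o < m) alpha o
  = k%:R * \sum_(a | cls a == i) p_ocs (cl (Tl a)).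
Proof.
have -> : \sum_(o < m) alpha o = k%:R * \sum_(b | cls b == i) G (cl (Tl b)).
  rewrite /alpha -mulr_sumr exchange_big /=; congr (_ * _); apply: eq_bigr => b _.
  rewrite /term -(big_mkord xpredT (fun n => G (cl (Lf b n.+1)) - G (cl (Lf b n)))).
  by rewrite telescope_sumr // Lfm Lf0 (cl_id 0 g0) GG0 subr0.
rewrite -mulrDr -big_split /=; congr (_ * _); apply: eq_bigr => a _.
rewrite /beta (_ : G (cl (Tl a)) = p_ocs (cl (Tl a)) - f (cl (Tl a))) //; ring.
Qed.

Lemma total_le : k%:R * \sum_(a | cls a == i) beta a + \sum_(o < m) alpha o
  <= k%:R * \sum_(a | cls a == i) p_ocs (Tl a).
Proof.
rewrite total; apply: ler_wpM2l; first exact: ler0n.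
apply: ler_sum => a _; apply: p_mono; [apply: cl_ge0; exact: Tl_ge0 | exact: cl_lex].
Qed.

Lemma Vstar_bound j (x : 'I_m -> A -> R) : (forall o a, 0 <= x o a) ->
  r * Vstar cls likes i (yvec cls j x)
    <= \sum_(a | cls a == i) beta a + \sum_(o < m) alpha o * yvec cls j x o.
Proof.
move=> x0.
have y0 o : 0 <= yvec cls j x o by apply: sumr_ge0 => a _.
set B := (X in _ <= X).
have core : forall z : 'I_m -> A -> R,
    (forall o a, 0 <= z o a) ->
    (forall o a, ~~ (likes a o && (cls a == i)) -> z o a = 0) ->
    (forall o, \sum_(a : A) z o a <= yvec cls j x o) ->
    (forall a, \sum_(o : 'I_m) z o a <= 1) ->
    r * \sum_(o : 'I_m) \sum_(a : A) z o a <= B.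
  move=> z z0 zE zy za.
  rewrite mulr_sumr.
  apply: le_trans (_ : _ <= \sum_(o < m) (\sum_(a : A) beta a * z o a + alpha o * \sum_(a : A) z o a)) _.
    apply: ler_sum => o _; rewrite mulr_sumr mulr_sumr -big_split /=.
    apply: ler_sum => a _; rewrite -mulrDl.
    case h: (likes a o && (cls a == i)).
      move/andP: h => [lao /eqP cao].
      by apply: ler_wpM2r; [exact: z0 | exact: edge].
    by rewrite zE ?h // !mulr0.
  rewrite big_split /=; apply: lerD.
    rewrite exchange_big /= [X in _ <= X]big_mkcond /=.
    apply: ler_sum => a _; rewrite -mulr_sumr.
    case ca: (cls a == i).
      by rewrite ler_piMr //; exact: beta_ge0.
    by rewrite big1 ?mulr0 // => o _; apply: zE; rewrite ca andbF.
  apply: ler_sum => o _; apply: ler_wpM2l; [exact: alpha_ge0 | exact: zy].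
have := r_ge0; rewrite le_eqVlt => /orP[/eqP <-|rpos].
  rewrite mul0r; apply: addr_ge0.
    by apply: sumr_ge0 => a _; exact: beta_ge0.
  by apply: sumr_ge0 => o _; apply: mulr_ge0; [exact: alpha_ge0 | exact: y0].
rewrite mulrC -ler_pdivlMr //; apply: ge_sup.
  exists 0, (fun _ _ => 0); split => //.
  - by move=> o; rewrite big1.
  - by move=> a; rewrite big1.
  - by rewrite big1 // => o _; rewrite big1.
move=> v [z [z0 zE zy za ->]]; rewrite ler_pdivlMr // mulrC; exact: core.
Qed.

Lemma prop_bound : r * prop_share R cls likes i <= \sum_(a | cls a == i) p_ocs (Tl a).
Proof.
set S := (X in _ <= X).
have kR : 0 < k%:R :> R by rewrite ltr0n (leq_ltn_trans (leq0n i) (ltn_ord i)).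
have main : forall x, frac_matching likes x ->
    r * min_classes i (fun j => Vstar cls likes i (yvec cls j x)) <= S.
  move=> x [x0 xE xo xa].
  rewrite -(ler_pM2l kR).
  apply: le_trans total_le.
  set M := min_classes _ _.
  have hk : k%:R * M <= \sum_(j < k) Vstar cls likes i (yvec cls j x).
    have -> : k%:R * M = \sum_(j < k) M by rewrite sumr_const card_ord mulr_natl.
    by apply: ler_sum => j _; exact: min_classes_le.
  have h1 : k%:R * (r * M) <= \sum_(j < k) r * Vstar cls likes i (yvec cls j x).
    by rewrite mulrCA -mulr_sumr; apply: ler_wpM2l => //; exact: r_ge0.
  apply: le_trans h1 _.
  have h2 : \sum_(j < k) r * Vstar cls likes i (yvec cls j x) <=
     \sum_(j < k) (\sum_(a | cls a == i) beta a + \sum_(o < m) alpha o * yvec cls j x o).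
    by apply: ler_sum => j _; exact: Vstar_bound.
  apply: le_trans h2 _.
  rewrite big_split /= sumr_const card_ord mulr_natl lerD2l.
  rewrite exchange_big /=; apply: ler_sum => o _; rewrite -mulr_sumr.
  have -> : \sum_(j < k) yvec cls j x o = \sum_(a : A) x o a.
    by rewrite (partition_big cls xpredT) //=.
  by apply: ler_piMr; [exact: alpha_ge0 | exact: xo].
have := r_ge0; rewrite le_eqVlt => /orP[/eqP <-|rpos].
  rewrite mul0r; apply: sumr_ge0 => a _; rewrite -(p0 R); apply: p_mono => //; exact: Tl_ge0.
rewrite mulrC -ler_pdivlMr //; apply: ge_sup.
  exists (min_classes i (fun j => Vstar cls likes i (yvec cls j (fun _ _ => 0)))), (fun _ _ => 0).
  split => //; split => //.
  - by move=> o; rewrite big1.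
  - by move=> a; rewrite big1.
move=> v [x [hx ->]]; rewrite ler_pdivlMr // mulrC; exact: main.
Qed.

End Comb.

Lemma prob_part (R : realType) (k m : nat) (A : finType)
  (cls : A -> 'I_k) (likes : A -> 'I_m -> bool) (xt : A -> 'I_m -> R)
  (d : measure_display) (Omega : measurableType d) (P : probability Omega R)
  (sel mt : 'I_m -> Omega -> option A) :
  is_OCS_run P xt sel ->
  is_rounding likes sel mt ->
  (forall o a, measurable [set w | mt o w = Some a]) ->
  forall i : 'I_k,
    ((\sum_(a | cls a == i) p_ocs (Tl R m A xt a))%:E
       <= \int[P]_w (Vclass R cls mt i w)%:E)%E.
Proof.
move=> [selm selpos selnone selp] hR mtm i.
pose Ea a := [set w | exists o, sel o w = Some a].
have mEa a : measurable (Ea a).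
  have -> : Ea a = \bigcup_(o in [set: 'I_m]) [set w | sel o w = Some a].
    apply/seteqP; split => w /=.
      by move=> [q hq]; exists q.
    by move=> [q _ hq]; exists q.
  apply: fin_bigcup_measurable; first exact: finite_finset.
  by move=> o _; exact: selm.
pose F (a : A) (w : Omega) : \bar R := if cls a == i then ((\1_(Ea a) w : R))%:E else 0%E.
have mF a : measurable_fun setT (F a).
  rewrite /F; case: (cls a == i); last exact: measurable_cst.
  by apply/measurable_EFinP; exact: measurable_indic.
have F0 a w : setT w -> (0 <= F a w)%E.
  by move=> _; rewrite /F; case: (cls a == i) => //; rewrite lee_fin indicE.
rewrite -sumEFin.
apply: le_trans (_ : (\sum_(a | cls a == i) P (Ea a) <= _)%E).
  by apply: lee_sum => a _; exact: selp.
have -> : (\sum_(a | cls a == i) P (Ea a) = \sum_(a <- index_enum A) \int[P]_w F a w)%E.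
  rewrite big_mkcond /=; apply: eq_bigr => a _; rewrite /F.
  case: (cls a == i); last by rewrite integral0.
  by rewrite integral_indic // setIT.
rewrite -ge0_integral_sum //.
apply: ge0_le_integral => //.
- by move=> w _; apply: sume_ge0 => a _; exact: F0.
- exact: emeasurable_sum.
- apply/measurable_EFinP.
  have -> : Vclass R cls mt i = (fun w => \sum_(o <- index_enum 'I_m) \sum_(a <- index_enum A)
        (if cls a == i then \1_[set w | mt o w = Some a] w else 0)).
    apply/funext => w; rewrite /Vclass; apply: eq_bigr => o _.
    rewrite big_mkcond /=; apply: eq_bigr => a _; case: (cls a == i) => //.
    rewrite indicE.
    case: (eqVneq (mt o w) (Some a)) => h; first by rewrite mem_set.
    by rewrite memNset //= => e; rewrite e eqxx in h.
  apply: measurable_sum => o; apply: measurable_sum => a.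
  case: (cls a == i); last exact: measurable_cst.
  exact: measurable_indic.
move=> w _.
rewrite /F -big_mkcond /= sumEFin lee_fin /Vclass exchange_big /=.
apply: ler_sum => a _.
rewrite indicE; case: (boolP (w \in Ea a)) => h; last by apply: sumr_ge0 => o _.
move: h; rewrite inE => -[q ho].
have [q2 ho2] : exists o', mt o' w = Some a.
  have [h1 _] := hR q w; rewrite ho in h1.
  case: (boolP (matched_before mt w a q)) => mb; last by exists q; exact: h1.
  by move/existsP: mb => [q3 /andP[_ /eqP e]]; exists q3.
rewrite (bigD1 q2) //= ho2 eqxx lerDl; exact: sumr_ge0.
Qed.

Theorem theorem7 (R : realType) (gamma : R) (k m : nat) (A : finType)
  (cls : A -> 'I_k) (likes : A -> 'I_m -> bool) (xt : A -> 'I_m -> R)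
  (d : measure_display) (Omega : measurableType d) (P : probability Omega R)
  (sel mt : 'I_m -> Omega -> option A) :
  0 <= gamma <= 1 ->
  is_EFTT cls likes gamma xt ->
  is_OCS_run P xt sel ->
  is_rounding likes sel mt ->
  (forall o a, measurable [set w | mt o w = Some a]) ->
  forall i : 'I_k,
    (rho gamma * (prop_share R cls likes i)%:E
       <= \int[P]_w (Vclass R cls mt i w)%:E)%E.
Proof.
move=> /andP[g0 g1] hE hO hR mtm i.
rewrite (rhoE R gamma g0) (_ : Phi R gamma = rr R gamma) // -EFinM.
have h1 := @prob_part R k m A cls likes xt d Omega P sel mt hO hR mtm i.
have h2 : ((rr R gamma * prop_share R cls likes i)%:E
   <= (\sum_(a | cls a == i) p_ocs (Tl R m A xt a))%:E)%E.
  by rewrite lee_fin; exact: prop_bound.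
exact: le_trans h2 h1.
Qed.
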